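(* Let $B$ be a real Banach space with norm $|\cdot|$, and $H$ a real Hilbert space that is a dense linear subspace of $B$ such that the inclusion map $H\to B$ is continuous. Then: (i) If $L$ is a closed codimension-one subspace of $B$, then there is a unique closed codimension-one subspace $M$ of $H$ whose closure in $B$ is $L$; namely $M=L\cap H$. (ii) Let $f_0\in H^*$ be nonzero. If $f_0$ is continuous with respect to $|\cdot|$, then the closure of $\ker f_0$ in $B$ is a codimension-one subspace of $B$; if $f_0$ is not continuous with respect to $|\cdot|$, then $\ker f_0$ is dense in $B$.
   Context: Here $H^*$ is the space of continuous linear functionals on $H$ with respect to the Hilbert norm; ''continuous with respect to $|\cdot|$'' means continuous for the restriction to $H$ of the Banach norm of $B$. *)

(* Defs.v *)
From HB Require Import structures.
From mathcomp Require Import all_boot all_order all_algebra.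
From mathcomp Require Import all_classical all_reals topology normedtype.
Set Implicit Arguments. Unset Strict Implicit. Unset Printing Implicit Defensive.
Import Order.TTheory GRing.Theory Num.Theory.
Import numFieldNormedType.Exports.
Local Open Scope classical_set_scope.
Local Open Scope ring_scope.

(* Together with completeness of H this makes H a real Hilbert space. *)
Definition inner_product_norm (R : realType) (H : normedModType R)
  (ip : H -> H -> R) : Prop :=
  [/\ (forall x y, ip x y = ip y x),
      (forall a x y z, ip (a *: x + y) z = a * ip x z + ip y z),
      (forall x, 0 <= ip x x) &
      (forall x, `|x| = Num.sqrt (ip x x)) ].

Definition lin_subspace (R : realType) (V : lmodType R) (L : set V) : Prop :=
  L 0 /\ (forall a x y, L x -> L y -> L (a *: x + y)).

Definition codim1 (R : realType) (V : lmodType R) (L : set V) : Prop :=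
  lin_subspace L /\ exists v : V, ~ L v /\ forall x, exists t : R, L (x - t *: v).

Definition closed_codim1 (R : realType) (V : normedModType R) (L : set V) : Prop :=
  closed L /\ codim1 L.

Definition lin_functional (R : realType) (V : lmodType R) (f : V -> R) : Prop :=
  forall a x y, f (a *: x + y) = a * f x + f y.

Definition continuous_wrt (R : realType) (H B : normedModType R)
  (incl : H -> B) (f : H -> R) : Prop :=
  forall x (e : R), 0 < e -> exists2 d : R, 0 < d &
    forall y, `|incl y - incl x| < d -> `|f y - f x| < e.

(* Main.v *)
Require Import Defs.
From HB Require Import structures.
From mathcomp Require Import all_boot all_order all_algebra.
From mathcomp Require Import all_classical all_reals topology normedtype.
From mathcomp Require Import ring lra.
Import Order.TTheory GRing.Theory Num.Theory.
Import numFieldNormedType.Exports.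
Local Open Scope classical_set_scope.
Local Open Scope ring_scope.

Section Aux.
Context {R : realType} {V : normedModType R}.

Lemma closure_normP (A : set V) x :
  closure A x <-> forall e : R, 0 < e -> exists a, A a /\ `|x - a| < e.
Proof.
split.
  move=> cl e e0.
  have : nbhs x (ball x e) by apply: nbhsx_ballx.
  move=> /cl [a [Aa]]; rewrite -ball_normE /= => xa.
  by exists a.
move=> H B /nbhs_ballP [e /= e0 sB].
have [a [Aa xa]] := H e e0.
exists a; split => //; apply: sB; rewrite -ball_normE /=; exact: xa.
Qed.

Lemma dist_pos (L : set V) w : closed L -> ~ L w ->
  exists2 r : R, 0 < r & forall l, L l -> r <= `|w - l|.
Proof.
move=> cL nLw.
have cl : ~ closure L w by move: cL; rewrite closure_id => <-.
apply: contrapT => nr; apply: cl; apply/closure_normP => e e0.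
apply: contrapT => ne; apply: nr; exists e => // l Ll.
rewrite leNgt; apply/negP => lt; apply: ne; by exists l.
Qed.
End Aux.


Section Sub.
Context {R : realType} {V : lmodType R}.
Implicit Types L M N : set V.

Lemma subZ L a x : lin_subspace L -> L x -> L (a *: x).
Proof. by case=> L0 HL Lx; rewrite -[_ *: _]addr0; apply: HL. Qed.

Lemma subD L x y : lin_subspace L -> L x -> L y -> L (x + y).
Proof. by case=> L0 HL Lx Ly; rewrite -[x]scale1r; apply: HL. Qed.

Lemma subN L x : lin_subspace L -> L x -> L (- x).
Proof. by move=> sL Lx; rewrite -scaleN1r; apply: subZ. Qed.

Lemma subB L x y : lin_subspace L -> L x -> L y -> L (x - y).
Proof. by move=> sL Lx Ly; apply: subD => //; apply: subN. Qed.

Lemma codim1_any L w : codim1 L -> ~ L w -> forall x, exists t, L (x - t *: w).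
Proof.
move=> [sL [v [nLv dec]]] nLw x.
have [s Ls] := dec w; have [t Lt] := dec x.
have s0 : s != 0.
  by apply/eqP => s0; apply: nLw; move: Ls; rewrite s0 scale0r subr0.
exists (t / s).
have -> : x - (t / s) *: w = (x - t *: v) - (t / s) *: (w - s *: v).
  rewrite scalerBr scalerA divfK // opprB addrA subrK //.
by apply: subB => //; apply: subZ.
Qed.

Lemma sub_max L M z : lin_subspace L -> codim1 M -> M `<=` L -> ~ L z ->
  L `<=` M.
Proof.
move=> sL cM ML nLz x Lx; apply: contrapT => nMx.
have [t Mt] := codim1_any M x cM nMx z.
apply: nLz; have -> : z = (z - t *: x) + t *: x by rewrite subrK.
by apply: subD => //; [apply: ML | apply: subZ].
Qed.
End Sub.

Section Norm.
Context {R : realType} {V : normedModType R}.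

Lemma dist_scale (L : set V) w r : lin_subspace L -> 0 < r ->
  (forall l, L l -> r <= `|w - l|) ->
  forall t l, L l -> `|t| * r <= `|t *: w - l|.
Proof.
move=> sL r0 Hr t l Ll.
have [->|t0] := eqVneq t 0; first by rewrite normr0 mul0r.
have -> : t *: w - l = t *: (w - t^-1 *: l).
  by rewrite scalerBr scalerA divff // scale1r.
rewrite normrZ ler_wpM2l //; apply: Hr; exact: subZ.
Qed.
End Norm.


Section Lin.
Context {R : realType} {U V : lmodType R} (f : {linear U -> V}).

Lemma sub_preim (L : set V) : lin_subspace L -> lin_subspace (f @^-1` L).
Proof.
case=> L0 HL; split; first by rewrite /preimage /= linear0.
by move=> a x y Lx Ly; rewrite /preimage /= linearP; apply: HL.
Qed.

Lemma sub_im (M : set U) : lin_subspace M -> lin_subspace (f @` M).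
Proof.
case=> M0 HM; split; first by exists 0 => //; rewrite linear0.
move=> a _ _ [x Mx <-] [y My <-]; exists (a *: x + y); first exact: HM.
by rewrite linearP.
Qed.
End Lin.

Section Cl.
Context {R : realType} {V : normedModType R}.

Lemma sub_closure (A : set V) : lin_subspace A -> lin_subspace (closure A).
Proof.
move=> sA; split; first by apply: subset_closure; case: sA.
move=> a x y /closure_normP cx /closure_normP cy; apply/closure_normP => e e0.
set e1 := e / 2 / (`|a| + 1).
have k0 : 0 < `|a| + 1 by rewrite ltr_wpDl.
have e10 : 0 < e1 by rewrite /e1 divr_gt0 // divr_gt0.
have e1k : e1 * (`|a| + 1) = e / 2 by rewrite /e1 divfK // gt_eqF.
have [x' [Ax' hx]] := cx e1 e10.
have [y' [Ay' hy]] := cy (e / 2) (divr_gt0 e0 (ltr0Sn _ 1)).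
exists (a *: x' + y'); split; first by case: sA => _; apply.
have -> : a *: x + y - (a *: x' + y') = a *: (x - x') + (y - y').
  by rewrite scalerBr opprD addrACA.
apply: (le_lt_trans (ler_normD _ _)); rewrite normrZ.
have h1 : `|a| * `|x - x'| <= `|a| * e1 by rewrite ler_wpM2l // ltW.
have ha := normr_ge0 a.
nra.
Qed.
End Cl.


Section PartI.
Context {R : realType} {B H : normedModType R} (incl : {linear H -> B}).
Hypothesis cincl : continuous incl.
Hypothesis dens : forall x e, 0 < e -> exists h, `|x - incl h| < e.

Lemma part_i (L : set B) : closed_codim1 L ->
     [/\ closed_codim1 (incl @^-1` L),
         closure (incl @` (incl @^-1` L)) = L &
         forall M : set H, closed_codim1 M -> closure (incl @` M) = L ->
           M = incl @^-1` L].
Proof.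
move=> [cL cdL]; have sL : lin_subspace L by case: cdL.
have [h0 nLh0] : exists h0, ~ L (incl h0).
  case: (cdL) => _ [v [nLv _]].
  have [r r0 Hr] := dist_pos L v cL nLv.
  have [h hv] := dens v r r0.
  by exists h => Lh; have := Hr _ Lh; rewrite leNgt hv.
have sP : lin_subspace (incl @^-1` L) by apply: sub_preim.
have cdP : codim1 (incl @^-1` L).
  split => //; exists h0; split => // x.
  have [t Lt] := codim1_any L (incl h0) cdL nLh0 (incl x).
  by exists t; rewrite /preimage /= linearB linearZ.
split.
- split => //; exact: (proj1 (continuous_closedP incl) cincl).
- apply/seteqP; split.
    move=> y /(closureS (@image_preimage_subset _ _ incl L)).
    by rewrite -(closure_id L).1.
  move=> l Ll; apply/closure_normP => e e0.
  set w := incl h0.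
  have [r r0 Hr] := dist_pos L w cL nLh0.
  have Hs := dist_scale L w r sL r0 Hr.
  set q := `|w| / r.
  have q0 : 0 <= q by rewrite /q divr_ge0 // ltW.
  have qr : q * r = `|w| by rewrite /q divfK // gt_eqF.
  have c0 : 0 < 1 + q by rewrite ltr_pwDl.
  set d := e / 2 / (1 + q).
  have d0 : 0 < d by rewrite /d divr_gt0 // divr_gt0.
  have dc : d * (1 + q) = e / 2 by rewrite /d divfK // gt_eqF.
  have [h hl] := dens l d d0.
  have [t Lt] := codim1_any L w cdL nLh0 (incl h).
  exists (incl (h - t *: h0)); split.
    by exists (h - t *: h0) => //; rewrite /preimage /= linearB linearZ.
  rewrite linearB linearZ -/w.
  set D := `|l - incl h|.
  have tD : `|t| * r <= D.
    have := Hs t (l - (incl h - t *: w)) (subB _ _ _ sL Ll Lt).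
    rewrite /D (distrC l).
    suff -> : t *: w - (l - (incl h - t *: w)) = incl h - l by [].
    by rewrite opprB addrA [t *: w + _]addrC subrK.
  have tw : `|t| * `|w| <= D * q.
    by rewrite -qr mulrCA mulrC ler_wpM2r.
  have Dd : D * (1 + q) < d * (1 + q) by rewrite ltr_pM2r.
  have -> : l - (incl h - t *: w) = (l - incl h) + t *: w.
    by rewrite opprB addrA addrAC.
  apply: (le_lt_trans (ler_normD _ _)); rewrite normrZ -/D.
  lra.
- move=> M [cM cdM] eM.
  have MP : M `<=` incl @^-1` L.
    move=> m Mm; rewrite /preimage /= -eM; apply: subset_closure; by exists m.
  apply/seteqP; split => //.
  exact: sub_max _ _ _ sP cdM MP nLh0.
Qed.
End PartI.


Lemma alg1 {R : realType} {V : lmodType R} (x y v : V) (a b : R) :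
  x - a *: v - (y - b *: v) = (x - y) + (b - a) *: v.
Proof.
by rewrite scalerBl opprB addrACA [RHS]addrACA [- y + _]addrC.
Qed.

Section PartII.
Context {R : realType} {B H : normedModType R} (incl : {linear H -> B}).
Hypothesis dens : forall x e, 0 < e -> exists h, `|x - incl h| < e.
Variable f0 : H -> R.
Hypothesis lf : lin_functional f0.

Lemma f00 : f0 0 = 0.
Proof.
have := lf (-1) 0 0; rewrite scaler0 addr0 mulN1r addNr //.
Qed.

Lemma fZ a x : f0 (a *: x) = a * f0 x.
Proof. by have := lf a x 0; rewrite addr0 f00 addr0. Qed.

Lemma fB x y : f0 (x - y) = f0 x - f0 y.
Proof.
by have := lf (-1) y x; rewrite scaleN1r mulN1r addrC [- f0 y + _]addrC.
Qed.

Let K := f0 @^-1` [set 0].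

Lemma sK : lin_subspace K.
Proof.
split; first exact: f00.
by move=> a x y Kx Ky; rewrite /K /preimage /= lf Kx Ky mulr0 addr0.
Qed.

Lemma part_ii_cont : f0 <> (fun=> 0) -> continuous_wrt incl f0 ->
  codim1 (closure (incl @` K)).
Proof.
move=> f0n cw.
have [h1 fh1] : exists h1, f0 h1 = 1.
  have [h0 fh0] : exists h0, f0 h0 != 0.
    apply: contrapT => nh; apply: f0n; apply: funext => h.
    by apply: contrapT => hn; apply: nh; exists h; apply/eqP.
  by exists ((f0 h0)^-1 *: h0); rewrite fZ mulVf.
have [C C0 HC] : exists2 C, 0 < C & forall y, `|f0 y| <= C * `|incl y|.
  have [d d0 Hd] := cw 0 1 ltr01.
  have d2 : 2 / d * d = 2 by rewrite divfK // gt_eqF.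
  exists (2 / d); first by rewrite divr_gt0.
  move=> y; rewrite leNgt; apply/negP => lt.
  have fy0 : 0 < `|f0 y|.
    apply: le_lt_trans lt; by rewrite mulr_ge0 // ltW // divr_gt0.
  have fy0' : f0 y != 0 by rewrite -normr_gt0.
  have H1 : `|incl ((f0 y)^-1 *: y) - incl 0| < d.
    rewrite linear0 subr0 linearZ normrZ normrV ?unitfE // mulrC ltr_pdivrMr //.
    have := normr_ge0 (incl y); have := ltW d0.
    nra.
  by have := Hd _ H1; rewrite f00 subr0 fZ mulVf // normr1 ltxx.
split; first exact/sub_closure/sub_im/sK.
set v := incl h1.
exists v; split.
  move=> /closure_normP /(_ (C^-1)) []; first by rewrite invr_gt0.
  move=> _ [[k Kk <-]] lt.
  have := HC (h1 - k); rewrite fB fh1 Kk subr0 normr1 linearB -/v.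
  have : C * `|v - incl k| < C * C^-1 by rewrite ltr_pM2l.
  rewrite divff ?gt_eqF //.
  lra.
move=> x.
set S := [set y | exists h, y = f0 h - C * `|incl h - x|].
have key : forall h h', f0 h - C * `|incl h - x| <= f0 h' + C * `|incl h' - x|.
  move=> h h'.
  have := HC (h - h'); rewrite fB linearB.
  have : `|incl h - incl h'| <= `|incl h - x| + `|incl h' - x|.
    by rewrite (distrC (incl h')) ler_distD.
  move=> t1 t2.
  have t3 := ler_norm (f0 h - f0 h').
  have t4 : C * `|incl h - incl h'| <= C * (`|incl h - x| + `|incl h' - x|).
    by rewrite ler_pM2l.
  lra.
have hS : has_sup S.
  split; first by exists (f0 0 - C * `|incl 0 - x|); exists 0.
  exists (f0 0 + C * `|incl 0 - x|) => _ [h ->]; exact: key.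
set t := sup S.
have tb : forall h, `|f0 h - t| <= C * `|x - incl h|.
  move=> h; rewrite distrC ler_norml.
  have u1 : f0 h - C * `|incl h - x| <= t.
    by apply: sup_upper_bound => //; exists h.
  have u2 : t <= f0 h + C * `|incl h - x|.
    by apply: ge_sup; [case: hS | move=> _ [h' ->]; exact: key].
  rewrite (distrC (incl h)) in u1 u2.
  apply/andP; split; lra.
exists t; apply/closure_normP => e e0.
set q := C * `|v|.
have q0 : 0 <= q by rewrite mulr_ge0 // ltW.
have c0 : 0 < 1 + q by rewrite ltr_pwDl.
set d := e / 2 / (1 + q).
have d0 : 0 < d by rewrite /d divr_gt0 // divr_gt0.
have dc : d * (1 + q) = e / 2 by rewrite /d divfK // gt_eqF.
have [h hx] := dens x d d0.
exists (incl (h - f0 h *: h1)); split.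
  exists (h - f0 h *: h1) => //.
  by rewrite /K /preimage /= fB fZ fh1 mulr1 subrr.
change (`|x - t *: v - incl (h - f0 h *: h1)| < e).
rewrite [incl (_ - _)]linearB [incl (_ *: _)]linearZ -/v.
rewrite alg1.
apply: (le_lt_trans (ler_normD _ _)); rewrite normrZ.
set D := `|x - incl h|.
have t1 : `|f0 h - t| * `|v| <= C * D * `|v|.
  by rewrite ler_wpM2r // tb.
have Dd : D * (1 + q) < d * (1 + q) by rewrite ltr_pM2r.
have : C * D * `|v| = D * q by rewrite /q mulrCA mulrA.
lra.
Qed.

Lemma part_ii_disc : ~ continuous_wrt incl f0 -> closure (incl @` K) = setT.
Proof.
move=> ncw.
have big : forall c, 0 < c -> exists y, `|incl y| < c /\ 1 <= `|f0 y|.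
  move=> c c0; apply: contrapT => nex; apply: ncw => x e e0.
  exists (c * e); first by rewrite mulr_gt0.
  move=> y hy.
  have : ~ (`|incl (e^-1 *: (y - x))| < c /\ 1 <= `|f0 (e^-1 *: (y - x))|).
    by move=> hh; apply: nex; exists (e^-1 *: (y - x)).
  rewrite [incl (_ *: _)]linearZ [incl (_ - _)]linearB normrZ fZ fB normrZ.
  rewrite gtr0_norm ?invr_gt0 //.
  have A : e^-1 * `|incl y - incl x| < c by rewrite mulrC ltr_pdivrMr.
  move=> /not_andP [//|H'].
  have : e^-1 * `|f0 y - f0 x| < 1 by rewrite ltNge; apply/negP.
  by rewrite mulrC ltr_pdivrMr // mul1r.
apply/seteqP; split => // x _; apply/closure_normP => e e0.
have e2 : 0 < e / 2 by rewrite divr_gt0.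
have [h hx] := dens x (e / 2) e2.
have [fh|fh] := eqVneq (f0 h) 0.
  exists (incl h); split; first by exists h.
  lra.
have fh0 : 0 < `|f0 h| by rewrite normr_gt0.
have [y [hy fy]] := big (e / 2 / `|f0 h|) (divr_gt0 e2 fh0).
have fy0 : f0 y != 0 by rewrite -normr_gt0; apply: lt_le_trans fy.
set s := f0 h / f0 y.
exists (incl (h - s *: y)); split.
  exists (h - s *: y) => //; by rewrite /K /preimage /= fB fZ /s divfK // subrr.
rewrite [incl (_ - _)]linearB [incl (_ *: _)]linearZ.
have -> : x - (incl h - s *: incl y) = (x - incl h) + s *: incl y.
  by rewrite opprB addrCA addrC.
apply: (le_lt_trans (ler_normD _ _)); rewrite normrZ.
have hs : `|s| * `|f0 y| = `|f0 h| by rewrite -normrM /s divfK.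
have hy' : `|incl y| * `|f0 h| < e / 2 by rewrite -ltr_pdivlMr.
have sh : `|s| <= `|f0 h|.
  rewrite -hs -{1}[`|s|]mulr1 ler_wpM2l //.
have t1 : `|s| * `|incl y| <= `|f0 h| * `|incl y| by rewrite ler_wpM2r.
lra.
Qed.
End PartII.

Theorem proposition5p3 (R : realType)
  (B : completeNormedModType R)
  (H : completeNormedModType R) (ip : H -> H -> R)
  (incl : {linear H -> B}) :
  inner_product_norm ip ->
  injective incl ->
  continuous incl ->
  closure (range incl) = setT ->
  (* (i) *)
  (forall L : set B, closed_codim1 L ->
     [/\ closed_codim1 (incl @^-1` L),
         closure (incl @` (incl @^-1` L)) = L &
         forall M : set H, closed_codim1 M -> closure (incl @` M) = L ->
           M = incl @^-1` L])
  /\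
  (* (ii) *)
  (forall f0 : H -> R, lin_functional f0 -> continuous f0 -> f0 <> (fun=> 0) ->
     (continuous_wrt incl f0 ->
        codim1 (closure (incl @` (f0 @^-1` [set 0]))))
     /\
     (~ continuous_wrt incl f0 ->
        closure (incl @` (f0 @^-1` [set 0])) = setT)).
Proof.
move=> _ _ cincl dense.
have dens : forall x e, 0 < e -> exists h, `|x - incl h| < e.
  move=> x e e0; have : closure (range incl) x by rewrite dense.
  by move/closure_normP/(_ e e0) => [_ [[h _ <-] hl]]; exists h.
split.
- by move=> L cL; apply: part_i.
- move=> f0 lf _ fn; split.
  + exact: part_ii_cont.
  + exact: part_ii_disc.
Qed.
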